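(* Let $k\ge2$ be an integer. For every integer $n>k-1$, $$D_k(n)+D_{k-1}(n)=D_{k-1}(n-k+1)+2A(n).$$
   Context: $A(n)$ is the number of partitions of $n$ into distinct parts. For $j\ge1$, $D_j(n)$ is the number of partitions of $n$ into non-negative parts (the part $0$ is allowed) in which the smallest part appears exactly $j$ times and no other part is repeated, with $D_j(0)=1$. *)

(* Defs.v *)
From mathcomp Require Import all_boot.
Set Implicit Arguments. Unset Strict Implicit. Unset Printing Implicit Defensive.

(* A partition is represented canonically as a nonincreasing list of its parts. *)

Fixpoint lists (L b : nat) : seq (seq nat) :=
  match L with
  | 0 => [:: [::]]
  | L'.+1 => [::] :: [seq x :: s | x <- iota 0 b.+1, s <- lists L' b]
  end.

Definition is_distinct_partition (n : nat) (s : seq nat) : bool :=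
  [&& sorted geq s, sumn s == n, all (fun x => 0 < x) s & uniq s].

(* s is a partition of n into non-negative parts (0 allowed) whose smallest
   part appears exactly j times and no other part is repeated *)
Definition is_Dj_partition (j n : nat) (s : seq nat) : bool :=
  let m := last 0 s in (* smallest part, since s is nonincreasing *)
  [&& sorted geq s, sumn s == n, s != [::], count_mem m s == j
    & uniq (filter (predC1 m) s)].

(* Every partition of n into distinct positive parts has at most n parts,
   each <= n, so it appears in [lists n n]. *)
Definition A (n : nat) : nat := count (is_distinct_partition n) (lists n n).

(* Every D_j-partition of n has at most j zeros and at most n positive parts,
   all <= n, so it appears in [lists (n + j) n]. *)
Definition D (j n : nat) : nat := count (is_Dj_partition j n) (lists (n + j) n).

(* Main.v *)
Require Import Defs.
From mathcomp Require Import all_boot.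
From mathcomp Require Import zify.
Set Implicit Arguments. Unset Strict Implicit. Unset Printing Implicit Defensive.


Lemma listsS L b : lists L.+1 b =
  [::] :: [seq x :: s | x <- iota 0 b.+1, s <- lists L b].
Proof. by []. Qed.

Lemma mem_lists L b s :
  (s \in lists L b) = (size s <= L) && all (fun x => x <= b) s.
Proof.
elim: L s => [|L IH] [|x s] //; rewrite listsS in_cons //.
apply/allpairsP/andP.
  move=> [[y t] [Hy Ht [-> ->]]].
  by move: Hy Ht; rewrite mem_iota add0n ltnS IH /= => Hy /andP[Ht Ha]; rewrite ltnS Ht Hy Ha.
move=> [Hs /andP[Hx Ha]]; exists (x, s); split => //.
  by rewrite mem_iota add0n ltnS.
by rewrite IH -ltnS Hs; apply: Ha.
Qed.

Lemma uniq_lists L b : uniq (lists L b).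
Proof.
elim: L => [|L IH] //; rewrite listsS cons_uniq; apply/andP; split.
  by apply/negP; case/allpairsP => [[y t] [_ _]].
apply: allpairs_uniq => //; first exact: iota_uniq.
by move=> [x1 s1] [x2 s2] _ _ /= [-> ->].
Qed.

Lemma count_inj (P Q : pred (seq nat)) (U V : seq (seq nat)) (f : seq nat -> seq nat) :
  uniq U -> {in [pred x | (x \in U) && P x] &, injective f} ->
  (forall s, s \in U -> P s -> (f s \in V) && Q (f s)) ->
  count P U <= count Q V.
Proof.
move=> uU inj H; rewrite -!size_filter -(size_map f); apply: uniq_leq_size.
  rewrite map_inj_in_uniq ?filter_uniq // => x y.
  rewrite !mem_filter => /andP[Px Ux] /andP[Py Uy]; apply: inj; by rewrite inE ?Px ?Ux ?Py ?Uy.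
move=> y /mapP [x]; rewrite mem_filter => /andP[Px Ux] ->; rewrite mem_filter.
by have /andP[-> ->] := H x Ux Px.
Qed.

Lemma count_bij (P Q : pred (seq nat)) (U V : seq (seq nat)) (f g : seq nat -> seq nat) :
  uniq U -> uniq V ->
  (forall s, s \in U -> P s -> [/\ f s \in V, Q (f s) & g (f s) = s]) ->
  (forall s, s \in V -> Q s -> [/\ g s \in U, P (g s) & f (g s) = s]) ->
  count P U = count Q V.
Proof.
move=> uU uV H1 H2; apply/eqP; rewrite eqn_leq; apply/andP; split.
  apply: (count_inj (f := f)) => //.
    move=> x y /andP[Ux Px] /andP[Uy Py] E.
    by case: (H1 x Ux Px) => _ _ <-; case: (H1 y Uy Py) => _ _ <-; rewrite E.
  by move=> s Us Ps; case: (H1 s Us Ps) => -> ->.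
apply: (count_inj (f := g)) => //.
  move=> x y /andP[Ux Px] /andP[Uy Py] E.
  by case: (H2 x Ux Px) => _ _ <-; case: (H2 y Uy Py) => _ _ <-; rewrite E.
by move=> s Us Ps; case: (H2 s Us Ps) => -> ->.
Qed.

Lemma count_any (P : pred (seq nat)) (U V : seq (seq nat)) :
  uniq U -> uniq V -> (forall s, P s -> (s \in U) && (s \in V)) ->
  count P U = count P V.
Proof.
move=> uU uV H; apply: (count_bij (f := id) (g := id)) => // s _ Ps;
by have /andP[H1 H2] := H s Ps; split.
Qed.

Lemma count_split (P Q : pred (seq nat)) (U : seq (seq nat)) :
  count P U = count (fun x => P x && Q x) U + count (fun x => P x && ~~ Q x) U.
Proof.
elim: U => //= x U ->; case: (P x); case: (Q x) => /=; lia.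
Qed.

Lemma geqT : transitive geq.
Proof. by move=> y x z /= H1 H2; exact: leq_trans H2 H1. Qed.

Lemma path_geq_last x s : path geq x s -> all (fun y => last x s <= y) (x :: s).
Proof.
elim: s x => [|y s IH] x /=; first by rewrite leqnn.
move=> /andP[Hxy Hp]; have /= /andP[H1 H2] := IH y Hp.
by rewrite (leq_trans H1 Hxy) H1 H2.
Qed.

Lemma sorted_last_min s : sorted geq s -> all (fun y => last 0 s <= y) s.
Proof. case: s => //= x s; exact: path_geq_last. Qed.

Lemma size_sumn s : all (fun x => 0 < x) s -> size s <= sumn s.
Proof.
elim: s => //= x s IH /andP[Hx /IH H]; rewrite -add1n; exact: leq_add.
Qed.

Lemma mem_sumn x s : x \in s -> x <= sumn s.
Proof.
elim: s => //= y s IH; rewrite in_cons => /orP[/eqP->|/IH H]; first exact: leq_addr.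
exact: leq_trans H (leq_addl _ _).
Qed.

Lemma count_mem_gt y s : all (fun x => y < x) s -> count_mem y s = 0.
Proof.
elim: s => //= x s IH /andP[Hx /IH ->]; rewrite addn0.
by case: eqP => // E; move: Hx; rewrite E ltnn.
Qed.

Lemma filter_gt y s : all (fun x => y < x) s -> filter (predC1 y) s = s.
Proof.
move=> H; apply/all_filterP; apply/allP => x Hx /=.
by have := allP H x Hx; rewrite ltn_neqAle eq_sym => /andP[].
Qed.

Lemma last_nseqn (x n : nat) : last x (nseq n x) = x.
Proof. by elim: n. Qed.

Lemma last_cat_nseq (x : nat) t j m : 0 < j -> last x (t ++ nseq j m) = m.
Proof. by case: j => // j _; rewrite last_cat /= last_nseqn. Qed.

Lemma path_nseq (y j m : nat) : m <= y -> path geq y (nseq j m).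
Proof.
elim: j y => //= j IH y H; rewrite H /=; exact: IH.
Qed.

Lemma sorted_cat_nseq t j m : sorted geq t -> all (fun x => m <= x) t ->
  sorted geq (t ++ nseq j m).
Proof.
case: t => [|x t] /=; first by move=> _ _; case: j => //= j; apply: path_nseq.
move=> Hp Ha; rewrite cat_path Hp /=; apply: path_nseq.
have /= /andP[H1 _] := path_geq_last Hp.
exact: (allP (Ha : all (fun x => m <= x) (x :: t)) _ (mem_last x t)).
Qed.

Lemma decomp (m : nat) t : sorted geq t -> all (fun x => m <= x) t ->
  t = filter (predC1 m) t ++ nseq (count_mem m t) m.
Proof.
elim: t => //= x t IH Hs /andP[Hmx Ha].
have Ht : sorted geq t := path_sorted Hs.
case: (eqVneq x m) => [Exm|Nxm] /=.
  subst x.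
  have Hall : all (pred1 m) t.
    apply/allP => y Hy; have := allP (order_path_min geqT Hs) y Hy.
    have := allP Ha y Hy => /= H1 H2; apply/eqP; lia.
  move/all_pred1P: Hall => ->.
  by rewrite filter_nseq count_nseq /= eqxx mul0n mul1n.
by rewrite {1}(IH Ht Ha).
Qed.

Lemma Dj_intro j m t : 0 < j -> sorted geq t -> uniq t -> all (fun x => m <= x) t ->
  is_Dj_partition (j + count_mem m t) (sumn t + j * m) (t ++ nseq j m).
Proof.
move=> Hj Hs Hu Ha; rewrite /is_Dj_partition last_cat_nseq //.
apply/and5P; split.
- exact: sorted_cat_nseq.
- by rewrite sumn_cat sumn_nseq mulnC.
- by case: t {Hs Hu Ha} => //; case: j Hj.
- by rewrite count_cat count_nseq /= eqxx mul1n addnC.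
- by rewrite filter_cat filter_nseq /= eqxx mul0n cats0 filter_uniq.
Qed.

Lemma Dj_elim c N s : is_Dj_partition c N s ->
  let m := last 0 s in let t := filter (predC1 m) s in
  [/\ sorted geq t, uniq t, all (fun x => m < x) t, s = t ++ nseq c m
    & sumn t + c * m = N].
Proof.
move=> /and5P[Hs /eqP HN Hne /eqP Hc Hu] m t.
have Hmin := sorted_last_min Hs.
have Hdec : s = t ++ nseq c m by rewrite -Hc; exact: decomp.
split => //.
- by rewrite /t; apply: (sorted_filter geqT)...
- apply/allP => x; rewrite mem_filter => /andP[/= Hxm Hxs].
  by have := allP Hmin x Hxs; rewrite leq_eqVlt eq_sym (negbTE Hxm).
- by rewrite -HN {1}Hdec sumn_cat sumn_nseq mulnC.
Qed.

Lemma Dj_mem c N s L b : is_Dj_partition c N s -> N + c <= L -> N <= b ->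
  s \in lists L b.
Proof.
move=> H HL Hb; rewrite mem_lists.
have [_ _ Ha Hdec Hsum] := Dj_elim H.
set t := filter (predC1 (last 0 s)) s in Ha Hdec Hsum.
have Hpos : all (fun x => 0 < x) t.
  by apply/allP => x Hx; have := allP Ha x Hx => /= H1; lia.
have Hsz := size_sumn Hpos.
move: H => /and5P[_ /eqP HN _ _ _].
apply/andP; split.
  rewrite Hdec size_cat size_nseq.
  have := leq_addr (c * last 0 s) (sumn t); rewrite Hsum => H1.
  by apply: leq_trans HL; rewrite leq_add2r; exact: leq_trans Hsz H1.
by apply/allP => x Hx; have := mem_sumn Hx; lia.
Qed.

Lemma dp_mem N t L b : is_distinct_partition N t -> N <= L -> N <= b ->
  t \in lists L b.
Proof.
move=> /and4P[_ /eqP HN Hpos _] HL Hb; rewrite mem_lists.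
have Hsz := size_sumn Hpos; apply/andP; split; first by rewrite (leq_trans Hsz) // HN.
by apply/allP => x Hx; have := mem_sumn Hx; lia.
Qed.

Lemma A_bij j N L b : 0 < j -> N + j <= L -> N <= b ->
  count (fun s => is_Dj_partition j N s && (last 0 s == 0)) (lists L b)
  = count (is_distinct_partition N) (lists L b).
Proof.
move=> Hj HL Hb.
apply: (count_bij (f := filter (predC1 0)) (g := fun t => t ++ nseq j 0));
  try exact: uniq_lists.
  move=> s _ /andP[H /eqP Hl].
  have [Hs Hu Ha Hdec Hsum] := Dj_elim H.
  rewrite Hl in Hs Hu Ha Hdec Hsum.
  have Hdp : is_distinct_partition N (filter (predC1 0) s).
    by apply/and4P; split => //; rewrite -Hsum muln0 addn0.
  split => //; first by apply: dp_mem Hdp _ Hb; lia.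
move=> t _ Ht; have /and4P[Hs /eqP Hsum Hpos Hu] := Ht.
have HD := Dj_intro (m := 0) Hj Hs Hu (sub_all (fun x (H : 0 < x) => leq0n x) Hpos).
rewrite count_mem_gt // muln0 addn0 addn0 Hsum in HD.
split.
- exact: Dj_mem HD HL Hb.
- by rewrite HD last_cat_nseq.
- by rewrite filter_cat filter_nseq /= ?mul0n ?muln0 cats0 filter_gt.
Qed.

Definition fup j (s : seq nat) :=
  let m := last 0 s in filter (predC1 m) s ++ nseq j m.+1.
Definition gdn j (s : seq nat) :=
  let m := last 0 s in filter (predC1 m) s ++ nseq (count_mem m s - j) m ++ nseq j m.-1.

Lemma uniq_cat_nseq01 t d (m : nat) : uniq t -> all (fun x => m < x) t -> d <= 1 ->
  uniq (t ++ nseq d m).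
Proof.
move=> Hu Ha; case: d => [|[|d]] // _; first by rewrite cats0.
rewrite cat_uniq Hu /= orbF andbT; apply/negP => Hm.
by have := allP Ha m Hm; rewrite /= ltnn.
Qed.

Lemma main_bij j n L b : 0 < j -> j <= n -> n + j.+1 <= L -> n <= b ->
  count (is_Dj_partition j (n - j)) (lists L b)
  = count (fun s => (is_Dj_partition j n s || is_Dj_partition j.+1 n s)
                    && (0 < last 0 s)) (lists L b).
Proof.
move=> Hj Hjn HL Hb.
apply: (count_bij (f := fup j) (g := gdn j)); try exact: uniq_lists.
  move=> s _ H.
  have [Hs Hu Ha Hdec Hsum] := Dj_elim H.
  rewrite /fup /gdn.
  set m := last 0 s in Hs Hu Ha Hdec Hsum *.
  set t := filter (predC1 m) s in Hs Hu Ha Hdec Hsum *.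
  have HD := Dj_intro (m := m.+1) Hj Hs Hu Ha.
  have Hsum' : sumn t + j * m.+1 = n by rewrite mulnS; lia.
  rewrite Hsum' (count_uniq_mem _ Hu) in HD.
  have Hl : last 0 (t ++ nseq j m.+1) = m.+1 by rewrite last_cat_nseq.
  split.
  - apply: Dj_mem HD _ Hb; case: (m.+1 \in t) => /=; lia.
  - rewrite Hl andbT; case: (m.+1 \in t) HD => /= HD; [rewrite addn1 in HD | rewrite addn0 in HD]; by rewrite HD ?orbT.
  rewrite Hl filter_cat filter_nseq /= eqxx mul0n cats0 count_cat count_nseq /= eqxx mul1n addnK /=.
  by rewrite catA -decomp // -Hdec.
move=> s _ /andP[HH Hm0].
have [c [Hc H]] : exists c, ((c == j) || (c == j.+1)) /\ is_Dj_partition c n s.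
  by case/orP: HH => H; [exists j; rewrite eqxx | exists j.+1; rewrite eqxx orbT].
have Hcnt : count_mem (last 0 s) s = c by move: H => /and5P[_ _ _ /eqP -> _].
have Hjc : j <= c by case/orP: Hc => /eqP ->.
have Hd : c - j <= 1 by case/orP: Hc => /eqP ->; rewrite ?subnn ?subSnn.
have [Hs Hu Ha Hdec Hsum] := Dj_elim H.
rewrite /fup /gdn Hcnt.
set m := last 0 s in Hm0 Hs Hu Ha Hdec Hsum *.
set t := filter (predC1 m) s in Hs Hu Ha Hdec Hsum *.
rewrite catA.
set t' := t ++ nseq (c - j) m.
have Hs' : sorted geq t' by apply: sorted_cat_nseq Hs (sub_all _ Ha) => x /= /ltnW.
have Hu' : uniq t' by apply: uniq_cat_nseq01.
have Ha' : all (fun x => m.-1 < x) t'.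
  rewrite all_cat all_nseq; apply/andP; split.
    by apply: sub_all Ha => x /= H1; lia.
  by apply/orP; right => /=; lia.
have HD := Dj_intro (m := m.-1) Hj Hs' Hu' (sub_all (fun x H => ltnW H) Ha').
have E1 : c * m = (c - j) * m + j * m by rewrite -mulnDl subnK.
have E2 : j * m = j * m.-1 + j by rewrite -mulnSr prednK.
have Hsum' : sumn t' + j * m.-1 = n - j.
  rewrite /t' sumn_cat sumn_nseq mulnC; lia.
rewrite (count_mem_gt Ha') addn0 Hsum' in HD.
have Hl : last 0 (t' ++ nseq j m.-1) = m.-1 by rewrite last_cat_nseq.
split.
- by apply: Dj_mem HD _ _; lia.
- exact: HD.
rewrite Hl filter_cat filter_nseq /= eqxx mul0n cats0 (filter_gt Ha') prednK //.
by rewrite /t' -catA -nseqD subnK // -Hdec.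
Qed.

Theorem theorem12 (k n : nat) :
  2 <= k -> k - 1 < n ->
  D k n + D (k - 1) n = D (k - 1) (n - (k - 1)) + 2 * A n.
Proof.
move=> Hk Hn.
have [j Ej] : exists j, k = j.+1 by exists k.-1; lia.
subst k; rewrite subn1 /= in Hn *.
have Hj : 0 < j by lia.
set U := lists (n + j.+1) n.
have eD1 : D j.+1 n = count (is_Dj_partition j.+1 n) U by [].
have eD2 : D j n = count (is_Dj_partition j n) U.
  rewrite /D; apply: count_any; try exact: uniq_lists.
  by move=> s Hs; rewrite !(Dj_mem Hs) //; lia.
have eD3 : D j (n - j) = count (is_Dj_partition j (n - j)) U.
  rewrite /D; apply: count_any; try exact: uniq_lists.
  by move=> s Hs; rewrite !(Dj_mem Hs) //; lia.
have eA : A n = count (is_distinct_partition n) U.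
  rewrite /A; apply: count_any; try exact: uniq_lists.
  by move=> s Hs; rewrite !(dp_mem Hs) //; lia.
have split1 c : count (is_Dj_partition c n) U =
   count (fun s => is_Dj_partition c n s && (last 0 s == 0)) U +
   count (fun s => is_Dj_partition c n s && (0 < last 0 s)) U.
  rewrite (count_split _ (fun s => last 0 s == 0)); congr (_ + _).
  by apply: eq_count => s; rewrite lt0n.
have hA1 := A_bij (N := n) Hj (L := n + j.+1) (b := n) ltac:(lia) (leqnn n).
have hA2 := A_bij (N := n) (j := j.+1) (ltn0Sn j) (L := n + j.+1) (b := n) (leqnn _) (leqnn n).
have hM := main_bij (n := n) Hj ltac:(lia) (L := n + j.+1) (leqnn _) (leqnn n).
have hor := count_predUI (fun s => is_Dj_partition j n s && (0 < last 0 s))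
                         (fun s => is_Dj_partition j.+1 n s && (0 < last 0 s)) U.
have H0 : count (predI (fun s => is_Dj_partition j n s && (0 < last 0 s))
                       (fun s => is_Dj_partition j.+1 n s && (0 < last 0 s))) U = 0.
  rewrite (eq_count (a2 := pred0)) ?count_pred0 // => s /=.
  apply/negP => /andP[/andP[/and5P[_ _ _ /eqP E1 _] _] /andP[/and5P[_ _ _ /eqP E2 _] _]].
  by rewrite E1 in E2; lia.
have hU : count (fun s => (is_Dj_partition j n s || is_Dj_partition j.+1 n s)
                    && (0 < last 0 s)) U =
          count (predU (fun s => is_Dj_partition j n s && (0 < last 0 s))
                       (fun s => is_Dj_partition j.+1 n s && (0 < last 0 s))) U.
  by apply: eq_count => s /=; rewrite andb_orl.
rewrite eD1 eD2 eD3 eA (split1 j) (split1 j.+1) hM hU.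
rewrite /U in hA1 hA2 hor H0 *.
rewrite hA1 hA2; lia.
Qed.
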